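(* Fix integers $k \ge 3$ and $i \in \{2,\dots,k-1\}$, and let $T = \{1,\dots,k\}\setminus\{i\}$. Let $d \ge 1$ and suppose that $S \subset C_d$ satisfies $|S| \equiv 1 \pmod{k-1}$ and $|S| \le d - \log_k d$. Then $T$ tiles $\mathbb{Z}_k^d \setminus S$, i.e. $\mathbb{Z}_k^d \setminus S$ is a disjoint union of copies of $T$ in $\mathbb{Z}_k^d$.
   Context: $\mathbb{Z}_k$ denotes the integers modulo $k$, with elements written $0,1,\dots,k-1$. A copy of $T$ in $\mathbb{Z}_k^d$ is a set of the form $\{x + j e_s : j \in \mathbb{Z}_k,\ j \ne j_0\}$ for some $x \in \mathbb{Z}_k^d$, some coordinate direction $s \in \{1,\dots,d\}$ (with $e_s$ the $s$-th unit vector) and some $j_0 \in \mathbb{Z}_k$; that is, a line in one coordinate direction with one point removed (equivalently, a translate of the image of $T$ under $\mathbb{Z}\to\mathbb{Z}_k$ placed along one coordinate axis). For $1 \le j \le d$, the $j$-th corner $c_{j,d} \in \mathbb{Z}_k^d$ is the point whose $j$-th coordinate is $k-1$ and whose other coordinates are $0$, and $C_d = \{c_{j,d} : 1 \le j \le d\}$. *)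

(* Defs.v *)
From Stdlib Require Reals.
From mathcomp Require Import all_boot.
Set Implicit Arguments. Unset Strict Implicit. Unset Printing Implicit Defensive.

(* Points of Z_k^d: functions from coordinates 'I_d to residues 'I_k
   (element of 'I_k with value v represents the residue class of v). *)
Definition point (k d : nat) := {ffun 'I_d -> 'I_k}.

Definition Tset (k i : nat) (t : nat) : bool := (1 <= t <= k) && (t != i).

Definition copyT (k d i : nat) (x : point k d) (s : 'I_d) : {set point k d} :=
  [set y : point k d |
     [forall t : 'I_d, (t != s) ==> (y t == x t)] &&
     [exists t : 'I_k.+1, Tset k i t && (val (y s) == (val (x s) + t) %% k)]].

Definition is_copyT (k d i : nat) (A : {set point k d}) : Prop :=
  exists (x : point k d) (s : 'I_d), A = copyT i x s.

Definition corner_pt (k d : nat) (j : 'I_d) (y : point k d) : bool :=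
  [forall t : 'I_d, val (y t) == (if t == j then k.-1 else 0)].

Definition corners (k d : nat) : {set point k d} :=
  [set y : point k d | [exists j : 'I_d, corner_pt j y]].

Definition tiles (k d i : nat) (X : {set point k d}) : Prop :=
  exists P : {set {set point k d}},
    partition P X /\ (forall A, A \in P -> is_copyT i A).

Definition logk (k d : nat) : Reals.Rdefinitions.R :=
  Reals.Rdefinitions.Rdiv (Reals.Rpower.ln (Reals.Raxioms.INR d))
                          (Reals.Rpower.ln (Reals.Raxioms.INR k)).

(* Main.v *)
Require Import Defs.
From Stdlib Require Reals.
From Stdlib Require Import Reals Lra Psatz.
From mathcomp Require Import all_boot zify.
Set Implicit Arguments. Unset Strict Implicit. Unset Printing Implicit Defensive.

Section Gen.
Variables (k d i : nat).
Notation pt := (point k d).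

Lemma tiles0 : tiles i (set0 : {set pt}).
Proof.
exists set0; split; last by move=> A; rewrite inE.
by rewrite partition_set0.
Qed.

Lemma tilesU (A B : {set pt}) : tiles i A -> tiles i B -> [disjoint A & B] ->
  tiles i (A :|: B).
Proof.
move=> [PA [pA cA]] [PB [pB cB]] dAB; exists (PA :|: PB); split; last first.
  by move=> X /setUP[]; [apply: cA | apply: cB].
move: pA pB => /and3P[/eqP cvA tA nA] /and3P[/eqP cvB tB nB].
apply/and3P; split.
- by rewrite /cover bigcup_setU -/(cover PA) -/(cover PB) cvA cvB.
- by apply: trivIsetU => //; rewrite cvA cvB.
- by rewrite inE negb_or nA nB.
Qed.

Lemma tiles_eq (A B : {set pt}) : A = B -> tiles i A -> tiles i B.
Proof. by move->. Qed.

Lemma tiles_copy (A : {set pt}) : is_copyT i A -> A != set0 -> tiles i A.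
Proof.
move=> cA nA; exists [set A]; split; last by move=> X; rewrite inE => /eqP->.
apply/and3P; split; first by rewrite cover1.
  exact: trivIset1.
by rewrite inE eq_sym.
Qed.

Lemma tiles_class (I : finType) (g : pt -> I) (X : {set pt}) :
  (forall c, tiles i [set x in X | g x == c]) -> tiles i X.
Proof.
move=> H.
suff: forall s : seq I, uniq s -> tiles i [set x in X | g x \in s].
  move=> /(_ (enum I) (enum_uniq _)); apply: tiles_eq; apply/setP => x.
  by rewrite !inE mem_enum andbT.
elim=> [|c s IH] /=.
  by move=> _; apply: tiles_eq tiles0; apply/setP => x; rewrite !inE andbF.
move=> /andP[cs us].
have -> : [set x in X | g x \in c :: s] =
   [set x in X | g x == c] :|: [set x in X | g x \in s].
  by apply/setP => x; rewrite !inE ?in_cons andb_orr.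
apply: tilesU => //; first exact: IH.
rewrite -setI_eq0; apply/eqP/setP => x; rewrite !inE.
apply/negP => /andP[/andP[_ /eqP E]] /andP[_]; rewrite E; exact/negP.
Qed.
End Gen.
Lemma mod2 k x : x < 2 * k -> x %% k = if x < k then x else x - k.
Proof.
move=> h2; case: ltnP => h1; first exact: modn_small.
have -> : x = (x - k) + k by lia.
rewrite modnDr modn_small; lia.
Qed.

Lemma arith_copy k i v u : 1 <= i < k -> v < k -> u < k ->
  (exists2 t, (0 < t <= k) && (t != i) & u = (((v + k - i) %% k) + t) %% k)
  <-> u != v.
Proof.
move=> /andP[i1 ik] vk uk; have k0 : 0 < k by lia.
rewrite (@mod2 k (v + k - i)); last by lia.
split.
  move=> [t /andP[/andP[t0 tk] ti]].
  repeat (case: ifP => ?); rewrite mod2; repeat (case: ifP => ?); lia.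
move=> uv.
set T := u + k - v + i.
exists (if T > 2 * k then T - 2 * k else if T > k then T - k else T).
  by rewrite /T; repeat (case: ifP => ?); lia.
rewrite /T; repeat (case: ifP => ?); rewrite mod2; repeat (case: ifP => ?); lia.
Qed.

Section Main.
Variables (n d i : nat).
Hypothesis (Hn : 2 <= n) (Hi : 2 <= i <= n).
Local Notation k := n.+1.
Local Notation pt := (point n.+1 d).

Definition upd (x : pt) (s : 'I_d) (a : 'I_k) : pt :=
  [ffun t => if t == s then a else x t].
Fact Line_key : unit. Proof. exact: tt. Qed.
Definition Line (y : pt) s (v : 'I_k) : {set pt} := locked_with Line_key
  [set z : pt | [forall t, (t != s) ==> (z t == y t)] && (z s != v)].

Lemma LineE (y : pt) s v : Line y s v =
  [set z : pt | [forall t, (t != s) ==> (z t == y t)] && (z s != v)].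
Proof. by rewrite /Line; case: Line_key. Qed.

Lemma Line_copy y s v : is_copyT i (Line y s v).
Proof.
exists (upd y s (inord ((v + k - i) %% k))), s.
apply/setP => z; rewrite /copyT LineE !inE.
congr andb.
  by apply: eq_forallb => t; rewrite ffunE; case: (t == s).
rewrite ffunE eqxx.
have -> : \val (inord ((v + k - i) %% k) : 'I_k) = (v + k - i) %% k.
  by apply: inordK; rewrite ltn_mod.
have := @arith_copy k i v (z s).
move=> /(_ _ (ltn_ord v) (ltn_ord (z s))) [].
  by move: Hi; lia.
move=> h1 h2; apply/idP/existsP; last first.
  move=> [t /andP[tT /eqP E]]; apply: h1; exists (val t) => //.
move=> /h2 [t tT E]; have tk : t < k.+1 by move: tT; lia.
exists (Ordinal tk); rewrite /Tset /= tT /=; exact/eqP.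
Qed.

Lemma tiles_Line y s v : tiles i (Line y s v).
Proof.
apply: tiles_copy; first exact: Line_copy.
apply/set0Pn; exists (upd y s (if v == ord0 then ord_max else ord0)).
rewrite LineE inE ffunE eqxx; apply/andP; split.
  by apply/forallP => t; apply/implyP => ts; rewrite ffunE (negbTE ts).
case: (v =P ord0) => [E|h].
  by rewrite E; apply/eqP => /(congr1 val) /=; move: Hn; lia.
by apply/eqP => E; apply: h; rewrite E.
Qed.


Fact Cube_key : unit. Proof. exact: tt. Qed.
Definition Cube (x : pt) (K : {set 'I_d}) : {set pt} := locked_with Cube_key
  [set y : pt | [forall t, (t \notin K) ==> (y t == x t)]].

Lemma CubeE (x : pt) K : Cube x K =
  [set y : pt | [forall t, (t \notin K) ==> (y t == x t)]].
Proof. by rewrite /Cube; case: Cube_key. Qed.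

Lemma CubeP (x : pt) (K : {set 'I_d}) (y : pt) : reflect (forall t, t \notin K -> y t = x t) (y \in Cube x K).
Proof.
rewrite CubeE inE; apply: (iffP forallP) => [h t tK|h t].
  by have := h t; rewrite tK => /eqP.
by apply/implyP => /h ->.
Qed.

Lemma agreeP (y x : pt) s :
  reflect (forall t, t != s -> y t = x t) [forall t, (t != s) ==> (y t == x t)].
Proof.
apply: (iffP forallP) => [h t ts|h t].
  by have := h t; rewrite ts => /eqP.
by apply/implyP => /h ->.
Qed.

Lemma LineP (y : pt) s v (z : pt) :
  reflect ((forall t, t != s -> z t = y t) /\ z s != v) (z \in Line y s v).
Proof.
rewrite LineE inE; apply: (iffP andP) => [[/agreeP h1 h2]|[h1 h2]]; split => //.
exact/agreeP.
Qed.

Lemma updE (x : pt) s a t : upd x s a t = if t == s then a else x t.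
Proof. by rewrite ffunE. Qed.

Lemma T1 c : forall (K : {set 'I_d}) (x : pt), #|K| = c -> tiles i (Cube x K :\ x).
Proof.
elim: c => [|c IH] K x cK.
  move/eqP: cK; rewrite cards_eq0 => /eqP ->.
  apply: tiles_eq (tiles0 _ _ _); apply/setP => y; rewrite !inE.
  apply/esym/negbTE; apply/andP => -[yx /CubeP h]; move/eqP: yx; apply.
  by apply/ffunP => t; apply: h; rewrite inE.
have : 0 < #|K| by rewrite cK.
move=> /card_gt0P [s sK].
have cK' : #|K :\ s| = c by move: cK; rewrite (cardsD1 s K) sK; case.
pose g (y : pt) := if [forall t, (t != s) ==> (y t == x t)] then None
                   else Some (y s).
apply: (tiles_class (g := g)) => -[a|]; last first.
  apply: tiles_eq (tiles_Line x s (x s)); apply/setP => y; rewrite !inE /g.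
  apply/LineP/idP => [[h1 h2]|].
    have -> : [forall t, (t != s) ==> (y t == x t)] by apply/agreeP.
    rewrite eqxx andbT; apply/andP; split.
      by apply: contra h2 => /eqP ->.
    by apply/CubeP => t tK; apply: h1; apply: contraNneq tK => ->.
  case: ifP => [/agreeP h1 /andP[/andP[yx _] _] | _]; last by rewrite andbF.
  split => //.
  apply: contra yx => /eqP E; apply/eqP/ffunP => t.
  by case: (t =P s) => [->|/eqP]; [rewrite E | apply: h1].
apply: tiles_eq (IH _ (upd x s a) cK'); apply/setP => y; rewrite !inE /g.
apply/idP/idP.
  move=> /andP[ya /CubeP h].
  have ys : y s = a by rewrite h ?updE ?eqxx // !inE eqxx.
  have nag : ~~ [forall t, (t != s) ==> (y t == x t)].
    apply: contra ya => /agreeP ag; apply/eqP/ffunP => t; rewrite updE.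
    by case: eqP => [->|/eqP]; [ | apply: ag].
  rewrite (negbTE nag) ys eqxx andbT; apply/andP; split.
    by apply: contra nag => /eqP ->; apply/agreeP.
  apply/CubeP => t tK; have ts : t != s by apply: contraNneq tK => ->.
  by rewrite h ?updE ?(negbTE ts) // !inE ts.
move=> /andP[/andP[yx /CubeP h]]; case: ifP => // /negbT nag /eqP[ys].
apply/andP; split.
  apply: contra nag => /eqP ->; apply/agreeP => t ts.
  by rewrite updE (negbTE ts).
apply/CubeP => t; rewrite !inE negb_and negbK updE; case: eqP => [->|/eqP ts] //=.
by move=> tK; apply: h.
Qed.



Lemma T1' (K : {set 'I_d}) (x : pt) : tiles i (Cube x K :\ x).
Proof. exact: T1. Qed.

Definition mix (K : {set 'I_d}) (y w : pt) : pt :=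
  [ffun t => if t \in K then y t else w t].

Lemma tiles_class0 (I : finType) (g : pt -> I) (X : {set pt}) :
  (forall c y, y \in X -> g y = c -> tiles i [set x in X | g x == c]) ->
  tiles i X.
Proof.
move=> H; apply: (tiles_class (g := g)) => c.
case: (set_0Vmem [set x in X | g x == c]) => [->|[y]]; first exact: tiles0.
by rewrite inE => /andP[yX /eqP gy]; apply: H gy.
Qed.

Lemma good (R K : {set 'I_d}) (z w : pt) : K \subset R -> w \in Cube z R ->
  tiles i (Cube z R :\: Cube w K).
Proof.
move=> /subsetP KR /CubeP wz.
apply: (tiles_class0 (g := mix K ^~ w)) => p y0 _ <-{p}.
set p := mix K y0 w.
apply: tiles_eq (T1' (R :\: K) p); apply/setP => y; rewrite !inE.
apply/idP/idP.
  move=> /andP[yp /CubeP h]; apply/andP; split; last first.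
    apply/eqP/ffunP => t; rewrite !ffunE; case: ifP => // tK.
    by rewrite h ?(ffunE, tK) // !inE tK.
  apply/andP; split.
    apply: contra yp => /CubeP h2; apply/eqP/ffunP => t.
    case tK: (t \in K).
      by rewrite h ?(ffunE, tK) // !inE tK.
    by rewrite h2 ?tK // !ffunE tK.
  apply/CubeP => t tR; rewrite h; last by rewrite !inE (negbTE tR) andbF.
  rewrite !ffunE; case: ifP => [/KR|_]; first by rewrite (negbTE tR).
  by apply: wz.
move=> /andP[/andP[ny /CubeP yz] /eqP gy]; apply/andP; split.
  apply: contra ny => /eqP ->; apply/CubeP => t tK.
  by rewrite /p ffunE (negbTE tK).
apply/CubeP => t; rewrite !inE negb_and negbK.
case tK: (t \in K) => /=; [move=> _ | move=> tR].
  by rewrite -gy !ffunE tK.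
by rewrite /p ffunE tK yz // wz.
Qed.


Definition twoNZ (J : {set 'I_d}) (x : pt) := [exists j, exists j',
  [&& j \in J, j' \in J, j != j', x j != ord0 & x j' != ord0]].

Fact Xs_key : unit. Proof. exact: tt. Qed.
Definition Xs (J : {set 'I_d}) : {set pt} := locked_with Xs_key
  [set x : pt | [forall t, (t \notin J) ==> (x t == ord0)] && twoNZ J x].
Lemma XsE J : Xs J =
  [set x : pt | [forall t, (t \notin J) ==> (x t == ord0)] && twoNZ J x].
Proof. by rewrite /Xs; case: Xs_key. Qed.

Lemma twoNZP (J : {set 'I_d}) (x : pt) : reflect (exists j j', [/\ j \in J, j' \in J, j != j',
   x j != ord0 & x j' != ord0]) (twoNZ J x).
Proof.
apply: (iffP existsP) => [[j /existsP[j' /and5P[*]]]|[j [j' [*]]]].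
  by exists j, j'.
by exists j; apply/existsP; exists j'; apply/and5P.
Qed.

Lemma XsP (J : {set 'I_d}) (x : pt) : reflect ((forall t, t \notin J -> x t = ord0) /\ twoNZ J x)
  (x \in Xs J).
Proof.
rewrite XsE inE; apply: (iffP andP) => [[/forallP h1 h2]|[h1 h2]]; split => //.
  by move=> t tJ; have := h1 t; rewrite tJ => /eqP.
by apply/forallP => t; apply/implyP => /h1 ->.
Qed.

Lemma tiles_Xs c : forall (J : {set 'I_d}), #|J| = c -> tiles i (Xs J).
Proof.
elim: c => [|c IH] J cJ.
  move/eqP: cJ; rewrite cards_eq0 => /eqP ->.
  apply: tiles_eq (tiles0 _ _ _); apply/setP => x; rewrite inE.
  apply/esym/negbTE/XsP => -[_ /twoNZP [j [j' [/[!inE] //]]]].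
have : 0 < #|J| by rewrite cJ.
move=> /card_gt0P [s sJ].
have cJ' : #|J :\ s| = c by move: cJ; rewrite (cardsD1 s J) sJ; case.
pose g (x : pt) := if x s == ord0 then None else Some (upd x s ord0).
apply: (tiles_class0 (g := g)) => -[p|] y0 y0X gy0.
  have y0s : y0 s != ord0 by move: gy0; rewrite /g; case: eqP.
  have py0 : p = upd y0 s ord0 by move: gy0; rewrite /g (negbTE y0s) => -[].
  apply: tiles_eq (tiles_Line p s ord0); apply/setP => x; rewrite inE.
  apply/LineP/idP => [[h1 h2]|].
    have gx : g x = Some p.
      rewrite /g (negbTE h2) py0; congr Some; apply/ffunP => t.
      by rewrite !updE; case: eqP => // /eqP ts; rewrite h1 // py0 updE (negbTE ts).
    rewrite gx eqxx andbT; apply/XsP; split.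
      move=> t tJ; have ts : t != s by apply: contraNneq tJ => ->.
      rewrite h1 // py0 updE (negbTE ts); move/XsP: y0X => [h0 _]; exact: h0.
    move/XsP: y0X => [_ /twoNZP [j [j' [jJ j'J jj' yj yj']]]].
    have [j0 [j0J j0s yj0]] : exists j0, [/\ j0 \in J, j0 != s & y0 j0 != ord0].
      case: (j =P s) => [E|/eqP js]; last by exists j.
      by exists j'; split => //; rewrite -E eq_sym.
    apply/twoNZP; exists s, j0; split => //; first by rewrite eq_sym.
    by rewrite h1 // py0 updE (negbTE j0s).
  move=> /andP[_]; rewrite /g; case: ifP => [_ //|/negbT xs /eqP [E]].
  split => // t ts; by rewrite -E updE (negbTE ts).
apply: tiles_eq (IH _ cJ'); apply/setP => x; rewrite inE /g.
apply/XsP/andP => [[h1 /twoNZP [j [j' [/[!inE] /andP[js jJ] /andP[j's j'J] jj' xj xj']]]]|].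
  have xs : x s = ord0 by apply: h1; rewrite !inE eqxx.
  rewrite xs eqxx; split => //; apply/XsP; split.
    by move=> t tJ; apply: h1; rewrite !inE negb_and negbK orbC tJ.
  by apply/twoNZP; exists j, j'.
move=> [/XsP [h1 /twoNZP [j [j' [jJ j'J jj' xj xj']]]] xs].
have xs0 : x s = ord0 by move: xs; case: (x s =P ord0) => // /eqP /negbTE ->.
split.
  move=> t tJ; case: (t =P s) => [->//|/eqP ts]; apply: h1.
  by move: tJ; rewrite !inE ts.
apply/twoNZP; exists j, j'; split => //.
  by rewrite !inE jJ andbT; apply: contra xj => /eqP ->; apply/eqP.
by rewrite !inE j'J andbT; apply: contra xj' => /eqP ->; apply/eqP.
Qed.


Lemma Cube_layer (w : pt) (R : {set 'I_d}) s (a : 'I_k) : s \in R ->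
  [set y | (y \in Cube w R) && (y s == a)] = Cube (upd w s a) (R :\ s).
Proof.
move=> sR; apply/setP => y; rewrite inE.
apply/andP/CubeP => [[/CubeP h /eqP ys] t|h].
  rewrite !inE negb_and negbK updE; case: eqP => [->//|_ /= tR]; exact: h.
split.
  apply/CubeP => t tR; have ts : t != s by apply: contraNneq tR => ->.
  by rewrite h ?updE ?(negbTE ts) // !inE ts.
by rewrite h ?updE ?eqxx // !inE eqxx.
Qed.

Lemma card_Cube c : forall (R : {set 'I_d}) (w : pt), #|R| = c -> #|Cube w R| = k ^ c.
Proof.
elim: c => [|c IH] R w cR.
  move/eqP: cR; rewrite cards_eq0 => /eqP ->.
  suff -> : Cube w set0 = [set w] by rewrite cards1.
  apply/setP => y; rewrite inE; apply/CubeP/eqP => [h|-> //].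
  by apply/ffunP => t; apply: h; rewrite inE.
have : 0 < #|R| by rewrite cR.
move=> /card_gt0P [s sR].
have cR' : #|R :\ s| = c by move: cR; rewrite (cardsD1 s R) sR; case.
rewrite -sum1_card (partition_big (fun y : pt => y s) predT) //=.
rewrite (eq_bigr (fun _ => k ^ c)); last first.
  by move=> a _; rewrite sum1dep_card Cube_layer // IH.
by rewrite sum_nat_const card_ord expnS.
Qed.


Lemma Cube_mem (w x y : pt) (R K : {set 'I_d}) : K \subset R ->
  x \in Cube w R -> y \in Cube x K -> y \in Cube w R.
Proof.
move=> /subsetP KR /CubeP xw /CubeP yx; apply/CubeP => t tR.
rewrite yx ?xw //; apply: contra tR; exact: KR.
Qed.

Lemma upd_id (x : pt) s : upd x s (x s) = x.
Proof. by apply/ffunP => t; rewrite updE; case: eqP => [->|]. Qed.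

Lemma upd_Cube (w x : pt) (R K : {set 'I_d}) s a : K \subset R -> s \in K ->
  x \in Cube w R -> upd x s a \in Cube w R.
Proof.
move=> /subsetP KR sK /CubeP xw; apply/CubeP => t tR; rewrite updE.
case: eqP => [E|_]; last exact: xw.
by move: tR; rewrite E (KR _ sK).
Qed.

Lemma ar1 (a b e : nat) : a != b -> (if a < b then a else a.-1) = e ->
  a = (if e < b then e else e.+1).
Proof. by case: ifP => h1; case: ifP => h2; lia. Qed.

Lemma ar2 (a b e : nat) : a = (if e < b then e else e.+1) ->
  (if a < b then a else a.-1) = e.
Proof. by case: ifP => h1; case: ifP => h2; lia. Qed.

Lemma part_exists (R : {set 'I_d}) (w : pt) q : 1 + q * n <= k ^ #|R| ->
  exists own : pt -> nat,
    (forall y, y \in Cube w R -> own y < 1 + q * n) /\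
    (forall c, c < 1 + q * n -> exists (x : pt) (K : {set 'I_d}),
        [/\ K \subset R, x \in Cube w R &
            [set y in Cube w R | own y == c] = Cube x K]).
Proof.
elim: q => [|q IH] hq.
  exists (fun _ => 0); split => // c; rewrite mul0n addn0 ltnS leqn0 => /eqP ->.
  exists w, R; split => //; first by apply/CubeP.
  by apply/setP => y; rewrite !inE eqxx andbT.
set m' := 1 + q * n.
have hq' : m' <= k ^ #|R| by apply: leq_trans hq; rewrite /m'; lia.
have [own' [H1 H2]] := IH hq'.
have [c0 c0m] : exists2 c0, c0 < m' &
    1 < #|[set y in Cube w R | own' y == c0]|.
  case: (boolP [exists c : 'I_m', 1 < #|[set y in Cube w R | own' y == c]|]).
    by move=> /existsP [c hc]; exists (val c); [exact: ltn_ord | exact: hc].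
  move=> /existsPn hc; exfalso.
  have inj : {in Cube w R &, injective (fun y => (inord (own' y) : 'I_m'))}.
    move=> y1 y2 y1R y2R /(congr1 val) /=.
    rewrite !inordK; try (apply: H1; assumption).
    move=> E; have := hc (Ordinal (H1 _ y1R)); rewrite -leqNgt => /card_le1_eqP.
    by apply; rewrite inE ?y1R ?y2R //= -?E eqxx.
  have := leq_card_in _ _ inj; rewrite card_ord (@card_Cube _ R w erefl).
  by move: hq; rewrite /m'; lia.
move=> hc0; have [x [K [KR xw HK]]] := H2 _ c0m.
have : K != set0.
  apply: contraTneq hc0 => K0; rewrite HK K0 (@card_Cube 0 set0 x) ?cards0 //.
move=> /set0Pn [s sK].
pose own y := if (y \in Cube x K) && (y s != x s) then
                m' + (if y s < x s then nat_of_ord (y s) else (y s).-1) else own' y.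
exists own; split.
  move=> y yR; rewrite /own; case: ifP => [/andP[_ ys]|_].
    have ys' : nat_of_ord (y s) != nat_of_ord (x s) by [].
    have := ltn_ord (y s); have := ltn_ord (x s); rewrite /m' mulSn.
    case: ifP => ?; lia.
  by have := H1 _ yR; rewrite /m' mulSn; lia.
move=> c cm.
have fiber0 : forall y, y \in Cube w R -> own' y = c0 -> y \in Cube x K.
  by move=> y yR yc; rewrite -HK inE yR yc eqxx.
have fiberx : forall y, y \in Cube x K -> own' y = c0.
  by move=> y; rewrite -HK inE => /andP[_ /eqP].
have KR' : K :\ s \subset R by apply: subset_trans KR; apply: subsetDl.
have xKR : forall y, y \in Cube x K -> y \in Cube w R by move=> y; apply: Cube_mem.
case: (ltnP c m') => cm'.
  case: (c =P c0) => [->|/eqP cc0].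
    exists x, (K :\ s); split => //.
    rewrite -{1}(upd_id x s) -Cube_layer //; apply/setP => y; rewrite !inE.
    apply/andP/andP => [[yR]|[yK /eqP ys]].
      rewrite /own; case: ifP => [_ /eqP|/negbT]; first by rewrite /m'; lia.
      move=> h /eqP yc; have yK := fiber0 _ yR yc.
      by move: h; rewrite yK /= negbK.
    split; first exact: xKR.
    by rewrite /own yK ys eqxx /= fiberx.
  have [x' [K' [K'R x'w HK']]] := H2 _ cm'; exists x', K'; split => //.
  rewrite -HK'; apply/setP => y; rewrite !inE; case yR: (y \in Cube w R) => //=.
  rewrite /own; case: ifP => // /andP[yK _].
  rewrite fiberx //; apply/idP/idP => /eqP E; first by move: cm'; rewrite -E /m'; lia.
  by move: cc0; rewrite E eqxx.
set e := c - m'.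
have en : e < n by move: cm; rewrite /e /m' mulSn; lia.
have vk : (if e < x s then e else e.+1) < k by case: ifP; lia.
pose v : 'I_k := Ordinal vk.
exists (upd x s v), (K :\ s); split => //; first exact: upd_Cube KR sK xw.
rewrite -Cube_layer //; apply/setP => y; rewrite !inE.
apply/andP/andP => [[yR]|[yK /eqP ys]].
  rewrite /own; case: ifP => [/andP[yK ys] /eqP E|_ /eqP E]; last first.
    by have := H1 _ yR; rewrite E; move: cm'; rewrite /m'; lia.
  split => //; apply/eqP/val_inj => /=.
  by apply: ar1 => //; rewrite /e -E addKn.
split; first exact: xKR.
have ys' : nat_of_ord (y s) = (if e < x s then e else e.+1) by rewrite ys.
have ysx : (y s != x s).
  apply/negP => /eqP /(congr1 val) /=; rewrite ys' /=; case: ifP; lia.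
rewrite /own yK ysx /=; apply/eqP; rewrite (ar2 ys') /e; lia.
Qed.


Definition z0 : pt := [ffun _ => ord0].
Definition cpt (j : 'I_d) : pt := [ffun t => if t == j then ord_max else ord0].

Lemma max0 : (ord_max : 'I_k) != ord0.
Proof. by apply/eqP => /(congr1 val) /=; move: Hn; lia. Qed.

Lemma main_tiles (J : {set 'I_d}) q : #|J| = 1 + q * n ->
  #|J| <= k ^ #|~: J| -> tiles i (~: (cpt @: J)).
Proof.
move=> Jm Jb.
have hb : 1 + q * n <= k ^ #|~: J| by rewrite -Jm.
have [own [Ho1 Ho2]] := @part_exists (~: J) z0 q hb.
set m := 1 + q * n in Jm Ho1 Ho2.
have [j0 j0J] : exists j0, j0 \in J.
  by apply/set0Pn; rewrite -card_gt0 Jm.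
pose jof c := nth j0 (enum J) c.
pose cof j := index j (enum J).
have sz : size (enum J) = m by rewrite -Jm cardE.
have jofJ : forall c, c < m -> jof c \in J.
  by move=> c cm; rewrite -mem_enum; apply: mem_nth; rewrite sz.
have cofm : forall j, j \in J -> cof j < m.
  by move=> j jJ; rewrite -sz index_mem mem_enum.
have cofK : forall j, j \in J -> jof (cof j) = j.
  by move=> j jJ; apply: nth_index; rewrite mem_enum.
have jofK : forall c, c < m -> cof (jof c) = c.
  by move=> c cm; apply: index_uniq; rewrite ?sz // enum_uniq.
pose bp (y : pt) : pt := [ffun t => if t \in J then ord0 else y t].
pose qp (y : pt) : pt := [ffun t => if t \in J then y t else ord0].
have bpC : forall y, bp y \in Cube z0 (~: J).
  by move=> y; apply/CubeP => t; rewrite inE negbK !ffunE => ->.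
pose dir (y : pt) := jof (own (bp y)).
have dirJ : forall y, dir y \in J by move=> y; apply/jofJ/Ho1/bpC.
pose inH (x : pt) := [forall t, ((t \in J) && (t != dir x)) ==> (x t == ord0)]
   && (x (dir x) != ord_max).
pose g (x : pt) : pt + option pt :=
  if inH x then inl (bp x) else if x \in Xs J then inr None else inr (Some (qp x)).
have inS : forall x : pt, reflect (exists2 j, j \in J & x = cpt j) (x \in cpt @: J).
  by move=> x; apply: (iffP imsetP).
apply: (tiles_class0 (g := g)) => -[y|[z|]] y0 y0X gy0.
- have [hy0 ey] : inH y0 /\ y = bp y0.
    by move: gy0; rewrite /g; case: ifP => [h [<-] //|_]; case: ifP.
  have dx : forall x, bp x = y -> dir x = dir y0 by move=> x bx; rewrite /dir bx ey.
  have y0J := dirJ y0.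
  apply: tiles_eq (tiles_Line y (dir y0) ord_max); apply/setP => x; rewrite !inE /g.
  apply/LineP/andP => [[h1 h2]|[xS]].
    have bpx : bp x = y.
      apply/ffunP => t; rewrite ey !ffunE; case tJ: (t \in J) => //.
      rewrite h1 ?ey ?ffunE ?tJ //; apply: contraFneq tJ => ->; exact: y0J.
    have hx : inH x.
      apply/andP; split; last by rewrite dx.
      apply/forallP => t; apply/implyP => /andP[tJ tx].
      have tx' : t != dir y0 by rewrite -(dx x bpx).
      by rewrite h1 // ey ffunE tJ.
    rewrite hx bpx eqxx; split => //.
    apply/inS => -[j' j'J E]; move: h2; case: (j' =P dir y0) => [<-|/eqP jd].
      by rewrite E ffunE eqxx eqxx.
    move: (h1 j' jd); rewrite E ey !ffunE eqxx j'J => M _.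
    by move: max0; rewrite M eqxx.
  case: ifP => hx; last by case: ifP.
  move=> /eqP [bpx]; have dxx := dx _ bpx.
  move/andP: hx => [/forallP hx1 hx2]; split; last by rewrite -dxx.
  move=> t td; case tJ: (t \in J).
    have := hx1 t; rewrite tJ dxx td => /eqP ->.
    by rewrite ey ffunE tJ.
  by rewrite -bpx ffunE tJ.
- have [nH0 nX0 ez] : [/\ ~~ inH y0, y0 \notin Xs J & z = qp y0].
    by move: gy0; rewrite /g; case: ifP => // /negbT h1; case: ifP => // /negbT h2 [<-].
  have zJ : forall t, t \notin J -> z t = ord0 by move=> t tJ; rewrite ez ffunE (negbTE tJ).
  have CJ : forall x, (x \in Cube z (~: J)) = (qp x == z).
    move=> x; apply/CubeP/eqP => [h|<- t]; last by rewrite inE negbK ffunE => ->.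
    apply/ffunP => t; rewrite ffunE; case: ifP => tJ; last by rewrite zJ ?tJ.
    by apply: h; rewrite inE negbK.
  have sJ : forall x t, x \in Cube z (~: J) -> t \in J -> x t = z t.
    by move=> x t /CubeP h tJ; apply: h; rewrite inE negbK.
  have twoH : forall x, twoNZ J x -> ~~ inH x.
    move=> x /twoNZP [j [j' [jJ j'J jj' xj xj']]].
    apply/negP => /andP[/forallP h _].
    case: (j =P dir x) => [E|/eqP jd].
      have := h j'; rewrite j'J /= -E eq_sym jj' /= => /eqP xj0.
      by move: xj'; rewrite xj0 eqxx.
    by have := h j; rewrite jJ jd /= (negbTE xj).
  have twoS : forall x, twoNZ J x -> x \notin cpt @: J.
    move=> x /twoNZP [j [j' [jJ j'J jj' xj xj']]].
    apply/inS => -[j'' _ E]; move: xj xj'; rewrite E !ffunE.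
    case: (j =P j'') => [E1|_]; last by rewrite eqxx.
    case: (j' =P j'') => [E2|_]; last by rewrite eqxx.
    by move: jj'; rewrite E1 E2 eqxx.
  have twoC : forall x, x \in Cube z (~: J) -> twoNZ J x = twoNZ J z.
    move=> x xC; apply/twoNZP/twoNZP => -[j [j' [jJ j'J jj' xj xj']]];
      exists j, j'; split => //; by rewrite ?(sJ x) // -?(sJ x).
  have classE : forall x, ((x \notin cpt @: J) && (g x == inr (Some z))) =
      [&& x \notin cpt @: J, ~~ inH x, x \notin Xs J & x \in Cube z (~: J)].
    move=> x; rewrite /g CJ; case: (inH x) => /=; first by rewrite andbF.
    by case: (x \in Xs J); rewrite /= ?andbF.
  case: (boolP (twoNZ J z)) => [tz|ntz].
    apply: tiles_eq (T1' (~: J) z); apply/setP => x; rewrite !inE classE.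
    case xC: (x \in Cube z (~: J)); rewrite ?andbF ?andbT //.
    rewrite twoS ?twoH ?twoC //=.
    congr negb; apply/eqP/XsP => [->|[h1 _]]; first by split.
    apply/ffunP => t; case tJ: (t \in J); first by rewrite (sJ x).
    by rewrite h1 ?zJ ?tJ.
  have y0z : forall t, t \in J -> y0 t = z t by move=> t tJ; rewrite ez ffunE tJ.
  have [j1 [j1J zj1 zu]] : exists j1, [/\ j1 \in J, z j1 != ord0 &
      forall t, t \in J -> t != j1 -> z t = ord0].
    case: (boolP [exists t, (t \in J) && (z t != ord0)]).
      move=> /existsP[j1 /andP[j1J zj1]]; exists j1; split => // t tJ tj.
      apply/eqP; apply: contraNT ntz => zt; apply/twoNZP; exists t, j1; split => //.
    move=> /existsPn h; exfalso; apply: (negP nH0); apply/andP; split.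
      apply/forallP => t; apply/implyP => /andP[tJ _]; rewrite y0z //.
      by have := h t; rewrite tJ /= negbK.
    rewrite y0z ?dirJ //; have := h (dir y0); rewrite dirJ /= negbK => /eqP ->.
    by rewrite eq_sym max0.
  have twoF : forall x, x \in Cube z (~: J) -> x \notin Xs J.
    by move=> x xC; apply/negP => /XsP [_]; rewrite twoC // (negbTE ntz).
  case: (z j1 =P ord_max) => [zmax|/eqP zmax].
    have zc : z = cpt j1.
      apply/ffunP => t; rewrite ffunE; case: (t =P j1) => [->//|/eqP tj].
      by case tJ: (t \in J); [rewrite zu | rewrite zJ ?tJ].
    apply: tiles_eq (T1' (~: J) z); apply/setP => x; rewrite !inE classE.
    case xC: (x \in Cube z (~: J)); rewrite ?andbF ?andbT //.
    rewrite twoF //=.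
    have -> : ~~ inH x.
      apply/negP => /andP[/forallP h hmax].
      case: (dir x =P j1) => [E|/eqP jd].
        by move: hmax; rewrite E (sJ x) // zmax eqxx.
      have := h j1; rewrite j1J eq_sym jd /= (sJ x) // zmax => /eqP M.
      by move: max0; rewrite M eqxx.
    rewrite !andbT; congr negb; apply/eqP/inS => [->|[j'' j''J E]].
      by exists j1.
    have : z j'' != ord0 by rewrite -(sJ x) // E ffunE eqxx max0.
    case: (j'' =P j1) => [E2|/eqP jd]; last by rewrite zu.
    by rewrite E zc E2.
  have [w' [K' [K'R w'C HF]]] := Ho2 _ (cofm _ j1J).
  have mC : mix J z w' \in Cube z (~: J).
    by apply/CubeP => t; rewrite inE negbK ffunE => ->.
  apply: tiles_eq (good K'R mC); apply/setP => x; rewrite !inE classE.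
  case xC: (x \in Cube z (~: J)); rewrite ?andbF ?andbT //.
  rewrite twoF //= andbT.
  have -> : x \notin cpt @: J.
    apply/inS => -[j'' _ E]; move: zj1 zmax; rewrite -(sJ x) // E ffunE.
    by case: (j1 == j''); rewrite eqxx.
  rewrite /=; congr negb.
  have -> : inH x = (dir x == j1).
    apply/idP/eqP => [/andP[/forallP h _]|E].
      apply/eqP; apply: contraNT zj1 => jd.
      by have := h j1; rewrite j1J eq_sym jd /= (sJ x).
    apply/andP; split; last by rewrite E (sJ x).
    apply/forallP => t; apply/implyP => /andP[tJ td].
    by rewrite (sJ x) // zu // -E.
  have -> : (dir x == j1) = (own (bp x) == cof j1).
    apply/eqP/eqP => [<-|E]; first by rewrite /dir jofK //; apply/Ho1/bpC.
    by rewrite /dir E cofK.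
  have -> : (own (bp x) == cof j1) = (bp x \in Cube w' K').
    by rewrite -HF inE bpC.
  move/subsetP: K'R => K'R; move/CubeP: w'C => w'C.
  apply/CubeP/CubeP => h t tK; rewrite ffunE; case: ifP => tJ.
  - by rewrite w'C ?ffunE // inE negbK.
  - by rewrite h // ffunE tJ.
  - by rewrite (sJ x).
  - by have := h t tK; rewrite ffunE tJ.
- apply: tiles_eq (@tiles_Xs _ J erefl); apply/setP => x; rewrite !inE /g.
  apply/idP/andP => [xX|[_]]; last by case: ifP => //; case: ifP.
  have [_ /twoNZP [j [j' [jJ j'J jj' xj xj']]]] := XsP _ _ xX.
  have nH : ~~ inH x.
    apply/negP => /andP[/forallP h _].
    case: (j =P dir x) => [E|/eqP jd].
      have := h j'; rewrite j'J /= -E eq_sym jj' /= => /eqP xj0.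
      by move: xj'; rewrite xj0 eqxx.
    by have := h j; rewrite jJ jd /= (negbTE xj).
  rewrite (negbTE nH) xX; split => //.
  apply/inS => -[j'' _ E]; move: xj xj'; rewrite E !ffunE.
  case: (j =P j'') => [E1|_]; last by rewrite eqxx.
  case: (j' =P j'') => [E2|_]; last by rewrite eqxx.
  by move: jj'; rewrite E1 E2 eqxx.
Qed.

End Main.

Section RB.
Local Open Scope R_scope.
Lemma real_bound (k d m : nat) : (2 <= k)%N -> (1 <= d)%N ->
  Rle (INR m) (Rminus (INR d) (logk k d)) -> (m <= d)%N /\ (d <= k ^ (d - m))%N.
Proof.
move=> /leP k2 /leP d1; rewrite /logk => HR.
have Ik : (2 <= INR k) by apply: (le_INR 2).
have Id : (1 <= INR d) by apply: (le_INR 1).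
have lk : (0 < ln (INR k)).
  by rewrite -ln_1; apply: ln_increasing; lra.
have ld : (0 <= ln (INR d)).
  case: (Rle_lt_or_eq_dec _ _ Id) => h; last by rewrite -h ln_1; lra.
  by rewrite -ln_1; apply: Rlt_le; apply: ln_increasing; lra.
have h1 : (ln (INR d) <= (INR d - INR m) * ln (INR k)).
  have E : (ln (INR d) = ln (INR d) / ln (INR k) * ln (INR k)) by field; lra.
  rewrite E; apply: Rmult_le_compat_r; lra.
have md : (m <= d)%N.
  case: (leqP m d) => // /ltP /lt_INR h; nra.
split => //.
have Ipos : (0 < INR k ^ (d - m)) by apply: pow_lt; lra.
have pw : forall e, INR (expn k e) = INR k ^ e.
  by elim => [|e IH] //=; rewrite expnS -multE mult_INR IH.
apply/leP/INR_le; rewrite pw; apply: Rnot_lt_le => h.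
have := ln_increasing _ _ Ipos h; rewrite ln_pow; last lra.
rewrite -minusE minus_INR; last exact/leP.
lra.
Qed.
End RB.

Theorem lemma3 (k i d : nat) (S : {set point k d}) :
  3 <= k -> 2 <= i <= k.-1 -> 1 <= d ->
  S \subset corners k d ->
  #|S| = 1 %[mod k.-1] ->
  Reals.Rdefinitions.Rle (Reals.Raxioms.INR #|S|)
    (Reals.Rdefinitions.Rminus (Reals.Raxioms.INR d) (logk k d)) ->
  tiles i (~: S).
Proof.
move=> hk hi hd HS Hm HR.
have [n En] : exists n, k = n.+3 by exists (k - 3); lia.
subst k.
have Hn : 2 <= n.+2 by [].
have Hi : 2 <= i <= n.+2 by [].
pose J := [set j | cpt n.+2 (d := d) j \in S].
have SJ : S = (@cpt n.+2 d) @: J.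
  apply/setP => y; apply/idP/imsetP.
    move=> yS; have := subsetP HS _ yS; rewrite inE => /existsP [j /forallP hj].
    have yc : y = @cpt n.+2 d j.
      apply/ffunP => t; apply: val_inj; have := hj t; rewrite ffunE.
      by case: (t == j) => /eqP ->.
    by exists j => //; rewrite inE -yc.
  by move=> [j jJ ->]; rewrite inE in jJ.
have cinj : injective (@cpt n.+2 d).
  move=> j1 j2 /ffunP /(_ j1); rewrite !ffunE eqxx.
  case: eqP => // _ E; move: (max0 Hn Hi); rewrite E eqxx //.
have cardJ : #|S| = #|J| by rewrite SJ card_imset.
have [md dk] := real_bound (k := n.+3) (d := d) (m := #|S|) (isT : 2 <= n.+3) hd HR.
have CJ : #|~: J| = d - #|J| by have := cardsC J; rewrite card_ord; lia.
have Jm : #|J| = 1 + (#|J| %/ n.+2) * n.+2.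
  move: Hm; rewrite /= cardJ (modn_small (isT : 1 < n.+2)) => Hm.
  by rewrite {1}(divn_eq #|J| n.+2) Hm addnC.
rewrite SJ; apply: (main_tiles Hn Hi Jm).
by rewrite CJ -cardJ; apply: leq_trans md dk.
Qed.
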